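(* For each $i\in E$, the torus-invariant divisors $\widetilde y_j$, $j\in\pi^{-1}(i)$, all have the same class in $A^1(X_{\mathbf a})$; denote it $y_i$. Moreover, $$A^\bullet(X_{\mathbf a})=\frac{\mathbb Z[x_S,y_i:\emptyset\subseteq S\subsetneq E,\ i\in E]}{\langle x_{S_1}x_{S_2}:S_1,S_2\text{ incomparable}\rangle+\langle x_Sy_i^{a_i}:i\notin S\rangle+\langle y_i-\sum_{S\not\ni i}x_S:i\in E\rangle}.$$
   Context: $E=\{1,\dots,m\}$, $\mathbf a\in\mathbb Z^m_{\ge0}$, $n=\sum a_i$, $\widetilde E$ an $n$-element set, $\pi:\widetilde E\to E$ with $|\pi^{-1}(i)|=a_i$, $\mathbf e_U=\sum_{j\in U}\mathbf e_j$. The polystellahedral fan $\Sigma_{\mathbf a}\subset\mathbb R^{\widetilde E}$ has cones $\operatorname{cone}(-\mathbf e_{\widetilde E\setminus\pi^{-1}(F_1)},\dots,-\mathbf e_{\widetilde E\setminus\pi^{-1}(F_k)},\mathbf e_j:j\in I)$ for $I\subseteq\widetilde E$ and chains $F_1\subsetneq\dots\subsetneq F_k\subsetneq F_{k+1}=E$ ($k\ge0$) with $\pi^{-1}(A)\subseteq I\Rightarrow A\subseteq F_1$; $X_{\mathbf a}$ its smooth projective toric variety. Its rays are $\rho_j=\mathbb R_{\ge0}\mathbf e_j$ ($j\in\widetilde E$), with divisor $\widetilde y_j$, and $\rho_S=\mathbb R_{\ge0}(-\mathbf e_{\widetilde E\setminus\pi^{-1}(S)})$ ($\emptyset\subseteq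 S\subsetneq E$), with divisor class $x_S$. *)

(* Defs.v *)
From HB Require Import structures.
From mathcomp Require Import all_boot all_order all_algebra.
From mathcomp Require Import mpoly.
Set Implicit Arguments. Unset Strict Implicit. Unset Printing Implicit Defensive.
Import Order.TTheory GRing.Theory Num.Theory.
Local Open Scope ring_scope.

Definition polyT (T : finType) := {mpoly int[#|T|]}.

Definition var (T : finType) (t : T) : polyT T := 'X_(enum_rank t).

Definition ideal_gen (R : comPzRingType) (G : R -> Prop) (p : R) : Prop :=
  exists s : seq (R * R), {in s, forall q, G q.2} /\
                          p = \sum_(q <- s) q.1 * q.2.

(* ---------- Data: E = 'I_m, Et = \widetilde E (finite type), pi : Et -> E.
   a_i := #|pi^{-1}(i)|. *)

Definition aa (m : nat) (Et : finType) (pi : Et -> 'I_m) (i : 'I_m) : nat :=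
  #|[set j | pi j == i]|.

Definition PS (m : nat) := {S : {set 'I_m} | S != setT}.

(* rays of the polystellahedral fan: rho_j (j in Et) and rho_S (S proper) *)
Definition Ray (m : nat) (Et : finType) := (Et + PS m)%type.

(* primitive vectors in Z^Et: rho_j = e_j, rho_S = - e_{Et \ pi^{-1}(S)} *)
Definition rayvec (m : nat) (Et : finType) (pi : Et -> 'I_m)
    (r : Ray m Et) (k : Et) : int :=
  match r with
  | inl j => if k == j then 1 else 0
  | inr F => if pi k \in val F then 0 else -1
  end.

(* generating set of rays of the cone attached to a chain C of proper subsets
   (F_1 < ... < F_k) and a set I of coordinates *)
Definition cone_rays (m : nat) (Et : finType) (C : {set PS m}) (I : {set Et})
    : {set Ray m Et} :=
  [set r : Ray m Et | match r with inl j => j \in I | inr F => F \in C end].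

Definition is_chain (m : nat) (C : {set PS m}) : Prop :=
  forall S T, S \in C -> T \in C -> (val S \subset val T) || (val T \subset val S).

(* the admissibility condition: pi^{-1}(A) ⊆ I  ==>  A ⊆ F_1,
   where F_1 is the least element of C ∪ {E}  (F_{k+1} = E) *)
Definition admissible (m : nat) (Et : finType) (pi : Et -> 'I_m)
    (C : {set PS m}) (I : {set Et}) : Prop :=
  forall A : {set 'I_m}, [set j | pi j \in A] \subset I ->
    forall F, F \in C -> A \subset val F.

(* a set of rays spans a cone of the polystellahedral fan Sigma_a
   (faces of cones are cones, so we close downward) *)
Definition is_face (m : nat) (Et : finType) (pi : Et -> 'I_m)
    (sigma : {set Ray m Et}) : Prop :=
  exists (C : {set PS m}) (I : {set Et}),
    is_chain C /\ admissible pi C I /\ sigma \subset cone_rays C I.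

(* ---------- Chow ring of the smooth complete toric variety X_a, via the
   Jurkiewicz--Danilov presentation: Z[x_rho] / (SR ideal + linear ideal). *)

Definition SR_gen (m : nat) (Et : finType) (pi : Et -> 'I_m)
    (p : polyT (Ray m Et)) : Prop :=
  exists sigma : {set Ray m Et}, ~ is_face pi sigma /\
    p = \prod_(r in sigma) var r.

Definition lin_gen (m : nat) (Et : finType) (pi : Et -> 'I_m)
    (p : polyT (Ray m Et)) : Prop :=
  exists u : Et -> int,
    p = \sum_(r : Ray m Et) (\sum_(k : Et) u k * rayvec pi r k)%:MP * var r.

Definition chow_ideal (m : nat) (Et : finType) (pi : Et -> 'I_m) :
    polyT (Ray m Et) -> Prop :=
  ideal_gen (fun p => SR_gen pi p \/ lin_gen pi p).

Definition Gen (m : nat) := (PS m + 'I_m)%type.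

Definition xS (m : nat) (S : PS m) : polyT (Gen m) := var (inl S : Gen m).
Definition yi (m : nat) (i : 'I_m) : polyT (Gen m) := var (inr i : Gen m).

Definition pres_gen (m : nat) (Et : finType) (pi : Et -> 'I_m)
    (p : polyT (Gen m)) : Prop :=
  (exists S1 S2 : PS m,
      ~~ (val S1 \subset val S2) /\ ~~ (val S2 \subset val S1) /\
      p = xS S1 * xS S2)
  \/ (exists (S : PS m) (i : 'I_m), i \notin val S /\
      p = xS S * yi i ^+ aa pi i)
  \/ (exists i : 'I_m, p = yi i - \sum_(S : PS m | i \notin val S) xS S).

Definition pres_ideal (m : nat) (Et : finType) (pi : Et -> 'I_m) :
    polyT (Gen m) -> Prop :=
  ideal_gen (pres_gen pi).

(* the comparison map: x_S |-> x_{rho_S}, y_i |-> \widetilde y_j for a chosen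
   j in pi^{-1}(i) (and 0 if the fibre is empty) *)
Definition cmp_img (m : nat) (Et : finType) (pi : Et -> 'I_m) (g : Gen m)
    : polyT (Ray m Et) :=
  match g with
  | inl F => var (inr F : Ray m Et)
  | inr i => match [pick j | pi j == i] with
             | Some j => var (inl j : Ray m Et)
             | None => 0
             end
  end.

Definition cmp_map (m : nat) (Et : finType) (pi : Et -> 'I_m)
    (p : polyT (Gen m)) : polyT (Ray m Et) :=
  mmap (@mpolyC _ _) (fun k => cmp_img pi (enum_val k)) p.

(* Main.v *)
Require Import Defs.
From HB Require Import structures.
From mathcomp Require Import all_boot all_order all_algebra.
From mathcomp Require Import mpoly.
From mathcomp Require Import ring.
Local Open Scope ring_scope.

Module Helpers.
Set Implicit Arguments. Unset Strict Implicit. Unset Printing Implicit Defensive.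
Import Order.TTheory GRing.Theory Num.Theory.

Section Ideal.
Variable R : comPzRingType.
Variable G : R -> Prop.
Local Notation I := (ideal_gen G).

Lemma ig0 : I 0.
Proof. by exists [::]; split; [move=> q; rewrite in_nil | rewrite big_nil]. Qed.

Lemma igG p : G p -> I p.
Proof.
move=> Gp; exists [:: (1, p)]; split; last by rewrite big_seq1 mul1r.
by move=> q; rewrite mem_seq1 => /eqP ->.
Qed.

Lemma igD p q : I p -> I q -> I (p + q).
Proof.
move=> [s [Hs ->]] [t [Ht ->]]; exists (s ++ t); split; last by rewrite big_cat.
by move=> x; rewrite mem_cat => /orP [/Hs|/Ht].
Qed.

Lemma igMl c p : I p -> I (c * p).
Proof.
move=> [s [Hs ->]]; exists [seq (c * q.1, q.2) | q <- s]; split.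
  by move=> x /mapP [q qs ->] /=; apply: Hs.
by rewrite big_map mulr_sumr; apply: eq_bigr => q _ /=; rewrite mulrA.
Qed.

Lemma igMr c p : I p -> I (p * c).
Proof. by move=> ?; rewrite mulrC; apply: igMl. Qed.

Lemma igN p : I p -> I (- p).
Proof. by move=> ?; rewrite -mulN1r; apply: igMl. Qed.

Lemma igB p q : I p -> I q -> I (p - q).
Proof. by move=> ? ?; apply: igD => //; apply: igN. Qed.

Lemma ig_sum (J : Type) (s : seq J) (P : pred J) (F : J -> R) :
  (forall j, P j -> I (F j)) -> I (\sum_(j <- s | P j) F j).
Proof.
move=> H; elim/big_ind: _ => //; [exact: ig0 | exact: igD].
Qed.

Lemma ideal_congM a b c d : I (a - b) -> I (c - d) -> I (a * c - b * d).
Proof.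
move=> H1 H2; have -> : a * c - b * d = a * (c - d) + (a - b) * d by ring.
by apply: igD; [apply: igMl | apply: igMr].
Qed.

Lemma ideal_congX a b k : I (a - b) -> I (a ^+ k - b ^+ k).
Proof.
move=> H; elim: k => [|k IH]; first by rewrite !expr0 subrr; exact: ig0.
by rewrite !exprS; apply: ideal_congM.
Qed.

Lemma ideal_congP (J : Type) (s : seq J) (P : pred J) (F F' : J -> R) :
  (forall j, P j -> I (F j - F' j)) ->
  I (\prod_(j <- s | P j) F j - \prod_(j <- s | P j) F' j).
Proof.
move=> H; elim/big_rec2: _ => [|j x y Pj Hxy]; first by rewrite subrr; exact: ig0.
exact: ideal_congM (H j Pj) Hxy.
Qed.

End Ideal.

Lemma ideal_mono (R : comPzRingType) (G H : R -> Prop) p :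
  (forall q, G q -> ideal_gen H q) -> ideal_gen G p -> ideal_gen H p.
Proof.
move=> GH [s [Hs ->]]; rewrite big_seq; apply: ig_sum => q qs.
by apply: igMl; apply: GH; apply: Hs.
Qed.

Lemma ideal_morph (R S : comPzRingType) (G : R -> Prop) (H : S -> Prop)
  (f : {rmorphism R -> S}) p :
  (forall q, G q -> ideal_gen H (f q)) -> ideal_gen G p -> ideal_gen H (f p).
Proof.
move=> GH [s [Hs ->]]; rewrite rmorph_sum big_seq; apply: ig_sum => q qs.
by rewrite rmorphM; apply: igMl; apply: GH; apply: Hs.
Qed.


Lemma mmap_comp (n : nat) (R V W : comRingType) (f : {rmorphism R -> V})
   (F : {rmorphism V -> W}) (h : 'I_n -> V) (p : {mpoly R[n]}) :
  F (mmap f h p) = mmap (F \o f) (F \o h) p.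
Proof.
rewrite /mmap rmorph_sum; apply: eq_bigr => mm _ /=.
by rewrite rmorphM /mmap1 rmorph_prod; congr (_ * _); apply: eq_bigr => i _; rewrite rmorphXn.
Qed.

Lemma mmap_eqf (n : nat) (R V : comRingType) (f1 f2 : R -> V)
   (h1 h2 : 'I_n -> V) (p : {mpoly R[n]}) :
  f1 =1 f2 -> h1 =1 h2 -> mmap f1 h1 p = mmap f2 h2 p.
Proof.
move=> e1 e2; rewrite /mmap; apply: eq_bigr => mm _.
by rewrite e1 (mmap1_eq _ e2).
Qed.

Lemma mmap_id (n : nat) (p : {mpoly int[n]}) :
  mmap (@mpolyC _ _) (fun k => 'X_k) p = p.
Proof.
rewrite {2}[p]mpolyE /mmap; apply: eq_bigr => mm _.
by rewrite mmap1_id mul_mpolyC.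
Qed.

Lemma rmorph_mpolyC (n : nat) (V : comRingType) (F : {rmorphism {mpoly int[n]} -> V}) c :
  F c%:MP = c%:~R.
Proof.
have -> : (c%:MP : {mpoly int[n]}) = c%:~R.
  by rewrite -(rmorph_int (@mpolyC n int)) intz.
by rewrite rmorph_int.
Qed.

Lemma mmap_cong (n : nat) (R V : comRingType) (G : V -> Prop) (f : R -> V)
   (h1 h2 : 'I_n -> V) (p : {mpoly R[n]}) :
  (forall k, ideal_gen G (h1 k - h2 k)) ->
  ideal_gen G (mmap f h1 p - mmap f h2 p).
Proof.
move=> H; rewrite /mmap -sumrB big_seq; apply: ig_sum => mm _.
rewrite -mulrBr; apply: igMl.
by rewrite /mmap1; apply: ideal_congP => i _; apply: ideal_congX.
Qed.

Lemma mmap_mmap (n n' n'' : nat) (h1 : 'I_n -> {mpoly int[n']}) (h2 : 'I_n' -> {mpoly int[n'']}) p :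
  mmap (@mpolyC n'' int) h2 (mmap (@mpolyC n' int) h1 p) =
  mmap (@mpolyC n'' int) (fun k => mmap (@mpolyC n'' int) h2 (h1 k)) p.
Proof.
rewrite (mmap_comp _ (mmap (@mpolyC n'' int) h2)).
by apply: mmap_eqf => // c /=; rewrite mmapC.
Qed.


Section Main.
Variables (m : nat) (Et : finType) (pi : Et -> 'I_m).

Lemma mmap_var (T : finType) (V : comRingType) (f : {rmorphism int -> V}) (h : 'I_#|T| -> V) (t : T) :
  mmap f h (var t) = h (enum_rank t).
Proof. by rewrite /var mmapX mmap1U. Qed.

Lemma rayvec_sum (T : finType) (f : Ray m Et -> polyT T) k :
  \sum_(r : Ray m Et) (rayvec pi r k)%:MP * f r =
  f (inl k) - \sum_(S : PS m | pi k \notin val S) f (inr S).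
Proof.
rewrite big_sumType /=; congr (_ + _).
  rewrite (bigD1 k) //= eqxx mpolyC1 mul1r big1 ?addr0 // => j /negbTE.
  by rewrite eq_sym => ->; rewrite mpolyC0 mul0r.
rewrite -sumrN [X in _ = X]big_mkcond; apply: eq_bigr => S _ /=.
by case: ifP => _; rewrite ?mpolyC0 ?mul0r ?oppr0 // mpolyCN mpolyC1 mulN1r.
Qed.

Definition sigF (S : PS m) (i : 'I_m) : {set Ray m Et} :=
  [set r | match r with inl j => pi j == i | inr T => T == S end].

Lemma prod_sigF (V : comRingType) (f : Ray m Et -> V) S i :
  \prod_(r in sigF S i) f r = f (inr S) * \prod_(j | pi j == i) f (inl j).
Proof.
rewrite big_mkcond big_sumType /= mulrC; congr (_ * _).
  rewrite (bigD1 S) //= inE eqxx big1 ?mulr1 // => T /negbTE nT.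
  by rewrite inE nT.
by rewrite [RHS]big_mkcond; apply: eq_bigr => j _; rewrite inE.
Qed.

Lemma nf_sigF (S : PS m) (i : 'I_m) : i \notin val S -> ~ is_face pi (sigF S i).
Proof.
move=> iS [C [I [ch [adm sub]]]].
have SC : S \in C.
  by have := subsetP sub (inr S); rewrite !inE eqxx => /(_ isT).
have fibI : [set j | pi j \in [set i]] \subset I.
  apply/subsetP => j; rewrite !inE => Hj.
  by have := subsetP sub (inl j); rewrite !inE Hj => /(_ isT).
have := adm _ fibI S SC; rewrite sub1set => iS'.
by rewrite iS' in iS.
Qed.

Lemma nf_pair (S1 S2 : PS m) : ~~ (val S1 \subset val S2) -> ~~ (val S2 \subset val S1) ->
  ~ is_face pi [set (inr S1 : Ray m Et); inr S2].
Proof.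
move=> n12 n21 [C [I [ch [adm sub]]]].
have S1C : S1 \in C.
  by have := subsetP sub (inr S1); rewrite !inE eqxx => /(_ isT).
have S2C : S2 \in C.
  by have := subsetP sub (inr S2); rewrite !inE eqxx orbT => /(_ isT).
by have := ch _ _ S1C S2C; rewrite (negbTE n12) (negbTE n21).
Qed.

Lemma prod_pair (V : comRingType) (f : Ray m Et -> V) (S1 S2 : PS m) : S1 != S2 ->
  \prod_(r in [set (inr S1 : Ray m Et); inr S2]) f r = f (inr S1) * f (inr S2).
Proof.
move=> ne; rewrite big_setU1 ?big_set1 // inE.
by apply/eqP => -[] /eqP; rewrite (negbTE ne).
Qed.

Local Notation CI := (chow_ideal pi).
Local Notation PI := (pres_ideal pi).

Lemma CI_lin k : CI (var (inl k : Ray m Et) - \sum_(S : PS m | pi k \notin val S) var (inr S : Ray m Et)).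
Proof.
apply: igG; right; exists (fun k' => (k' == k)%:R).
rewrite -(rayvec_sum (fun r => var r)); apply: eq_bigr => r _; congr (_%:MP * _).
rewrite (bigD1 k) //= eqxx mul1r big1 ?addr0 // => j /negbTE ->; by rewrite mul0r.
Qed.

Lemma CI_xS (S : PS m) (i : 'I_m) : i \notin val S -> (forall j, pi j != i) -> CI (var (inr S : Ray m Et)).
Proof.
move=> iS nf; apply: igG; left; exists (sigF S i); split; first exact: nf_sigF.
rewrite prod_sigF big1 ?mulr1 // => j; by rewrite (negbTE (nf j)).
Qed.

End Main.


Section Main2.
Variables (m : nat) (Et : finType) (pi : Et -> 'I_m).
Local Notation CI := (chow_ideal pi).
Local Notation PI := (pres_ideal pi).

Lemma mmap_varE (T : finType) (V : comRingType) (f : {rmorphism int -> V}) (F : T -> V) (t : T) :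
  mmap f (fun k => F (enum_val k)) (var t) = F t.
Proof. by rewrite mmap_var enum_rankK. Qed.

Lemma part1 (j j' : Et) : pi j = pi j' ->
  CI (var (inl j : Ray m Et) - var (inl j' : Ray m Et)).
Proof.
move=> e; have := igB (CI_lin pi j) (CI_lin pi j'); rewrite e.
set s := (\sum_(_ | _) _); move=> H.
by have <- : (var (inl j : Ray m Et) - s) - (var (inl j' : Ray m Et) - s) =
   var (inl j : Ray m Et) - var (inl j' : Ray m Et) by ring.
Qed.

Lemma fiberP (i : 'I_m) :
  (exists2 j0, pi j0 = i & cmp_img pi (inr i) = var (inl j0 : Ray m Et)) \/
  ((forall j, pi j != i) /\ cmp_img pi (inr i) = 0).
Proof.
rewrite /cmp_img; case: pickP => [j0 /eqP e | none].
  by left; exists j0.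
by right; split => // j; rewrite none.
Qed.

Lemma cmp_var (g : Gen m) : cmp_map pi (var g) = cmp_img pi g.
Proof. by rewrite /cmp_map mmap_varE. Qed.

Lemma part2 (q : polyT (Ray m Et)) : exists p : polyT (Gen m), CI (q - cmp_map pi p).
Proof.
exists (mmap (@mpolyC _ int) (fun k => (fun r : Ray m Et => match r with
   inl j => yi (pi j) | inr F => xS F end) (enum_val k)) q).
rewrite /cmp_map mmap_mmap.
rewrite -{1}[q]mmap_id (@mmap_eqf _ _ _ _ (@mpolyC _ int) (fun k => 'X_k)
   (fun k => var (enum_val k))) //; last by move=> k; rewrite /var enum_valK.
apply: mmap_cong => k; case: (enum_val k) => [j|F].
  rewrite -/(cmp_map pi (yi (pi j))) /yi cmp_var.
  case: (fiberP (pi j)) => [[j0 e ->]|[nf _]]; last by have := nf j; rewrite eqxx.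
  by apply: part1.
by rewrite -/(cmp_map pi (xS F)) /xS cmp_var /= subrr; apply: ig0.
Qed.


Lemma prod_sub (V : comRingType) (A B : {set Ray m Et}) (f : Ray m Et -> V) :
  B \subset A -> \prod_(r in A) f r = \prod_(r in B) f r * \prod_(r in A :\: B) f r.
Proof. by move=> sBA; rewrite (big_setID B) /= (setIidPr sBA). Qed.

Lemma aa0 (i : 'I_m) : (forall j, pi j != i) -> aa pi i = 0%N.
Proof.
move=> nf; rewrite /aa; apply/eqP; rewrite cards_eq0; apply/eqP/setP => j.
by rewrite !inE (negbTE (nf j)).
Qed.

Lemma fiber_pow (V : comRingType) (c : V) (i : 'I_m) :
  c ^+ aa pi i = \prod_(j | pi j == i) c.
Proof.
by rewrite /aa -prodr_const; apply: eq_bigl => j; rewrite inE.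
Qed.

Lemma part3a (p : polyT (Gen m)) : PI p -> CI (cmp_map pi p).
Proof.
rewrite /cmp_map; apply: ideal_morph => q.
rewrite -/(cmp_map pi q).
case=> [[S1 [S2 [n12 [n21 ->]]]] | [[S [i [iS ->]]] | [i ->]]].
  rewrite rmorphM /xS /= !mmap_varE /=; apply: igG; left.
  exists [set (inr S1 : Ray m Et); inr S2]; split; first exact: nf_pair.
  rewrite prod_pair //; apply/eqP => e; by rewrite e subxx in n12.
- rewrite rmorphM rmorphXn /xS /yi /= !mmap_varE.
  case: (fiberP i) => [[j0 e ->]|[nf ->]]; last first.
    by rewrite aa0 // expr0 mulr1; apply: (CI_xS iS).
  have HM : CI (var (inr S : Ray m Et) * \prod_(j | pi j == i) var (inl j : Ray m Et)).
    apply: igG; left; exists (sigF pi S i); split; first exact: nf_sigF.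
    by rewrite (prod_sigF pi (fun r => var r)).
  have HD : CI (var (inr S : Ray m Et) * var (inl j0 : Ray m Et) ^+ aa pi i -
       var (inr S : Ray m Et) * \prod_(j | pi j == i) var (inl j : Ray m Et)).
    rewrite -mulrBr; apply: igMl; rewrite fiber_pow.
    apply: ideal_congP => j /eqP ej; apply: part1; by rewrite e ej.
  by have := igD HD HM; rewrite subrK.
- rewrite rmorphB rmorph_sum /yi /= mmap_varE.
  under eq_bigr => S _ do rewrite /xS /= mmap_varE.
  case: (fiberP i) => [[j0 e ->]|[nf ->]].
    by rewrite -e; apply: CI_lin.
  rewrite sub0r; apply: igN; apply: ig_sum => S iS.
  exact: (CI_xS iS).
Qed.


Definition psi_img (r : Ray m Et) : polyT (Gen m) :=
  match r with inl j => yi (pi j) | inr F => xS F end.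

Local Notation psi := (mmap (@mpolyC _ int) (fun k => psi_img (enum_val k))).

Lemma psi_SR (sigma : {set Ray m Et}) : ~ is_face pi sigma ->
  PI (\prod_(r in sigma) psi_img r).
Proof.
move=> nf.
pose C0 := [set S | (inr S : Ray m Et) \in sigma].
pose I0 := [set j | (inl j : Ray m Et) \in sigma].
have sub : sigma \subset cone_rays C0 I0 by apply/subsetP => -[j|S] H; rewrite !inE.
case: (boolP [forall S : PS m, forall T : PS m, (S \in C0) ==> (T \in C0) ==>
   (val S \subset val T) || (val T \subset val S)]) => [/forallP ch | /forallPn [S /forallPn [T]]].
  case: (boolP [forall A : {set 'I_m}, ([set j | pi j \in A] \subset I0) ==>
     [forall F, (F \in C0) ==> (A \subset val F)]]) => [/forallP ad | /forallPn [A]].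
    exfalso; apply: nf; exists C0, I0; split; [|split] => //.
      by move=> S T SC TC; have /forallP /(_ T) := ch S; rewrite SC TC.
    by move=> A HA F FC; have := ad A; rewrite HA /= => /forallP /(_ F); rewrite FC.
  rewrite negb_imply => /andP [HA /forallPn [F]].
  rewrite negb_imply => /andP [FC /subsetPn [i iA iF]].
  have ssub : sigF pi F i \subset sigma.
    apply/subsetP => -[j|T]; rewrite inE.
      move=> /eqP e; have := subsetP HA j; rewrite !inE e iA => /(_ isT).
      by [].
    by move=> /eqP ->; rewrite inE in FC.
  rewrite (prod_sub _ ssub) (prod_sigF pi psi_img) /=; apply: igMr.
  apply: igG; right; left; exists F, i; split => //.
  congr (_ * _); rewrite fiber_pow; apply: eq_bigr => j /eqP e; by rewrite /= e.
rewrite !negb_imply => /and3P [SC TC]; rewrite negb_or => /andP [nST nTS].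
have ssub : [set (inr S : Ray m Et); inr T] \subset sigma.
  apply/subsetP => r; rewrite !inE => /orP [/eqP->|/eqP->].
    by rewrite inE in SC.
  by rewrite inE in TC.
rewrite (prod_sub _ ssub) prod_pair; last by apply/eqP => e; rewrite e subxx in nST.
apply: igMr; apply: igG; left; by exists S, T.
Qed.


Lemma psi_lin (u : Et -> int) :
  PI (psi (\sum_(r : Ray m Et) (\sum_(k : Et) u k * rayvec pi r k)%:MP * var r)).
Proof.
rewrite raddf_sum /=.
under eq_bigr => r _ do rewrite rmorphM /= mmapC mmap_varE raddf_sum mulr_suml.
rewrite exchange_big /=; apply: ig_sum => k _.
under eq_bigr => r _ do rewrite mpolyCM -mulrA.
rewrite -mulr_sumr rayvec_sum; apply: igMl; apply: igG; right; right.
by exists (pi k).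
Qed.


Lemma part3b (p : polyT (Gen m)) : CI (cmp_map pi p) -> PI p.
Proof.
move=> H.
have H1 : PI (psi (cmp_map pi p)).
  apply: (ideal_morph _ H) => q [[sigma [nf ->]]|[u ->]].
    by rewrite rmorph_prod /=; under eq_bigr => r _ do rewrite mmap_varE; apply: psi_SR.
  exact: psi_lin.
have H2 : PI (p - psi (cmp_map pi p)).
  rewrite /cmp_map mmap_mmap.
  rewrite -{1}[p]mmap_id (@mmap_eqf _ _ _ _ (@mpolyC _ int) (fun k => 'X_k)
     (fun k => var (enum_val k))) //; last by move=> k; rewrite /var enum_valK.
  apply: mmap_cong => k; case: (enum_val k) => [F|i].
    by rewrite /= mmap_varE /= subrr; apply: ig0.
  rewrite /= -/(cmp_img pi (inr i)); case: (fiberP i) => [[j0 e ->]|[nf ->]].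
    by rewrite mmap_varE /= e subrr; apply: ig0.
  rewrite mmap0 subr0.
  have -> : var (inr i : Gen m) = (yi i - \sum_(S : PS m | i \notin val S) xS S) +
      \sum_(S : PS m | i \notin val S) xS S by rewrite subrK.
  apply: igD; first by apply: igG; right; right; exists i.
  apply: ig_sum => S iS; apply: igG; right; left; exists S, i; split => //.
  by rewrite aa0 // expr0 mulr1.
by have := igD H2 H1; rewrite subrK.
Qed.

End Main2.


End Helpers.
Import Helpers.

Theorem corollary2p5 (m : nat) (Et : finType) (pi : Et -> 'I_m) :
  (* all \widetilde y_j, j in pi^{-1}(i), have the same class in A^1(X_a) *)
  (forall j j' : Et, pi j = pi j' ->
     chow_ideal pi (var (inl j : Ray m Et) - var (inl j' : Ray m Et)))
  (* the comparison map induces Z[x_S, y_i]/J  ≅  A^*(X_a): surjective ... *)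
  /\ (forall q : polyT (Ray m Et),
        exists p : polyT (Gen m), chow_ideal pi (q - cmp_map pi p))
  (* ... with kernel exactly the stated ideal J *)
  /\ (forall p : polyT (Gen m), chow_ideal pi (cmp_map pi p) <-> pres_ideal pi p).
Proof.
split; first exact: part1.
split; first exact: part2.
move=> p; split; [exact: part3b | exact: part3a].
Qed.
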